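(* For every $g\ge 1$, every nice path of $\mathcal{H}_g$ from $v_1$ to $v_2$ is oddly oriented relative to $\mathcal{H}_g^e$.
   Context: The graphs $\mathcal{H}_g$ with hubs $v_1,v_2,v_3,v_4$ and orientations $\mathcal{H}_g^e$ are defined recursively. $\mathcal{H}_1$ is the 4-cycle with edges $\{v_1,v_2\},\{v_1,v_3\},\{v_2,v_4\},\{v_3,v_4\}$, oriented $v_1\to v_2$, $v_1\to v_3$, $v_4\to v_2$, $v_3\to v_4$. For $g>1$, take four disjoint copies $\mathcal{H}_{g-1}^{(i)}$, $i=1,\dots,4$, of $\mathcal{H}_{g-1}$, each oriented as a copy of $\mathcal{H}_{g-1}^e$, with hubs $v_k^{(i)}$; identify $v_1^{(1)},v_1^{(4)}$ as $v_1$, $v_2^{(2)},v_1^{(3)}$ as $v_4$, $v_2^{(1)},v_1^{(2)}$ as $v_3$, and $v_2^{(3)},v_2^{(4)}$ as $v_2$; $\mathcal{H}_g^e$ is the union of the copies' orientations. Paths are elementary (no repeated vertices). A path $P$ of a graph $G$ is nice if the subgraph of $G$ induced by the vertices not on $P$ has a perfect matching. A path from $u$ to $v$ is oddly oriented if, traversing it from $u$ to $v$, an odd number of its edges are oriented in the direction of traversal. *)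

(* Defs.v *)
From mathcomp Require Import all_boot.
Set Implicit Arguments. Unset Strict Implicit. Unset Printing Implicit Defensive.

(* A graph with oriented edges, on vertices labelled by naturals.
   gbound : all vertex labels are < gbound;
   gverts : the vertex set;
   garcs  : the oriented edges, (u, v) meaning u -> v. *)
Record ograph := OGraph { gbound : nat; gverts : seq nat; garcs : seq (nat * nat) }.

Definition v1 := 0. Definition v2 := 1. Definition v3 := 2. Definition v4 := 3.

Definition H1 : ograph :=
  OGraph 4 [:: 0; 1; 2; 3] [:: (v1, v2); (v1, v3); (v4, v2); (v3, v4)].

(* Relabelling of copy i (i = 0..3, standing for copies 1..4) of a graph of bound B:
   hub v1 of the copy goes to a, hub v2 to b, any other vertex x to 4 + i*B + x
   (fresh, pairwise distinct across copies). *)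
Definition relab (B i a b x : nat) : nat :=
  if x == v1 then a else if x == v2 then b else 4 + i * B + x.

(* identifications: copy1: v1->v1, v2->v3; copy2: v1->v3, v2->v4;
                    copy3: v1->v4, v2->v2; copy4: v1->v1, v2->v2 *)
Definition copy_hubs : seq (nat * (nat * nat)) :=
  [:: (0, (v1, v3)); (1, (v3, v4)); (2, (v4, v2)); (3, (v1, v2))].

Definition Hstep (G : ograph) : ograph :=
  let B := gbound G in
  let f c x := relab B c.1 c.2.1 c.2.2 x in
  OGraph (4 + 4 * B)
    (undup ([:: v1; v2; v3; v4] ++
            flatten [seq [seq f c x | x <- gverts G] | c <- copy_hubs]))
    (flatten [seq [seq (f c e.1, f c e.2) | e <- garcs G] | c <- copy_hubs]).

(* H g = H_g^e for g >= 1 (H 0 is an unused junk value equal to H_1). *)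
Fixpoint H (g : nat) : ograph :=
  match g with
  | 0 | 1 => H1
  | g'.+1 => Hstep (H g')
  end.

Definition adj (G : ograph) (u v : nat) : bool :=
  ((u, v) \in garcs G) || ((v, u) \in garcs G).

Definition is_path (G : ograph) (p : seq nat) : bool :=
  [&& p != [::], uniq p, all (fun v => v \in gverts G) p
    & path (adj G) (head 0 p) (behead p)].

Definition perfect_matching_of (G : ograph) (S : seq nat) (M : seq (nat * nat)) : Prop :=
  (forall e, e \in M -> [/\ e.1 != e.2, adj G e.1 e.2, e.1 \in S & e.2 \in S]) /\
  (forall v, v \in S -> count (fun e => (e.1 == v) || (e.2 == v)) M = 1).

Definition nice (G : ograph) (p : seq nat) : Prop :=
  exists M, perfect_matching_of G [seq v <- gverts G | v \notin p] M.

Definition oddly_oriented (G : ograph) (p : seq nat) : bool :=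
  odd (count (fun e => e \in garcs G) (zip p (behead p))).

(* Main.v *)
Require Import Defs.
From mathcomp Require Import all_boot zify.
Set Warnings "-notation-overridden".


Definition ha i := match i with 0 => 0 | 1 => 2 | 2 => 3 | _ => 0 end.
Definition hb i := match i with 0 => 2 | 1 => 3 | 2 => 1 | _ => 1 end.
Definition F (B i x : nat) := relab B i (ha i) (hb i) x.

Lemma ha_lt i : ha i < 4. Proof. by case: i => [|[|[|[|i]]]]. Qed.
Lemma hb_lt i : hb i < 4. Proof. by case: i => [|[|[|[|i]]]]. Qed.
Lemma F0 B i : F B i 0 = ha i. Proof. by []. Qed.
Lemma F1 B i : F B i 1 = hb i. Proof. by []. Qed.
Lemma Fbig B i x : 1 < x -> F B i x = 4 + i * B + x.
Proof. rewrite /F /relab /v1 /v2. by case: x => [|[|x]]. Qed.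
Lemma F_ge4 B i x : 1 < x -> 4 <= F B i x.
Proof. move=> h; rewrite Fbig //; lia. Qed.
Lemma F_lt4 B i x : x < 2 -> F B i x < 4.
Proof. by case: x => [|[|x]] // _; rewrite ?F0 ?F1 ?ha_lt ?hb_lt. Qed.

Lemma F_inj B i j x y : 1 < x -> x < B -> 1 < y -> y < B ->
  F B i x = F B j y -> i = j /\ x = y.
Proof.
move=> x1 xB y1 yB; rewrite !Fbig // => E0.
have E : i * B + x = j * B + y by lia.
have B0 : 0 < B by lia.
have Ei : (i * B + x) %/ B = i by rewrite divnMDl // divn_small // addn0.
have Ej : (j * B + y) %/ B = j by rewrite divnMDl // divn_small // addn0.
have ij : i = j by rewrite -Ei -Ej E.
by subst; split => //; lia.
Qed.
Arguments F_lt4 B i {x}.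
Arguments F_ge4 B i {x}.
Arguments F_inj {B i j x y}.


Lemma memV G u : u \in gverts (Hstep G) ->
  u < 4 \/ exists2 i, i < 4 & exists2 x, x \in gverts G & u = F (gbound G) i x.
Proof.
rewrite /Hstep mem_undup mem_cat => /orP[|].
  by rewrite !inE => /or4P[]/eqP->; left.
rewrite /copy_hubs /= !mem_cat in_nil orbF => /or4P[]/mapP[x xG ->]; right.
- by exists 0 => //; exists x.
- by exists 1 => //; exists x.
- by exists 2 => //; exists x.
- by exists 3 => //; exists x.
Qed.

Lemma memV' G i x : i < 4 -> x \in gverts G -> F (gbound G) i x \in gverts (Hstep G).
Proof.
move=> + xG; rewrite /Hstep mem_undup mem_cat /copy_hubs /= !mem_cat in_nil orbF.
case: i => [|[|[|[|i]]]] // _; apply/orP; right.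
- by apply/or4P; constructor 1; apply/mapP; exists x.
- by apply/or4P; constructor 2; apply/mapP; exists x.
- by apply/or4P; constructor 3; apply/mapP; exists x.
- by apply/or4P; constructor 4; apply/mapP; exists x.
Qed.

Lemma memV01 G u : u < 4 -> u \in gverts (Hstep G).
Proof.
by rewrite /Hstep mem_undup mem_cat; case: u => [|[|[|[|u]]]].
Qed.

Lemma memA G u w : (u, w) \in garcs (Hstep G) ->
  exists2 i, i < 4 & exists2 e, e \in garcs G & u = F (gbound G) i e.1 /\ w = F (gbound G) i e.2.
Proof.
rewrite /Hstep /copy_hubs /= !mem_cat in_nil orbF => /or4P[]/mapP[e eG [-> ->]].
- by exists 0 => //; exists e.
- by exists 1 => //; exists e.
- by exists 2 => //; exists e.
- by exists 3 => //; exists e.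
Qed.

Lemma memA' G i e : i < 4 -> e \in garcs G ->
  (F (gbound G) i e.1, F (gbound G) i e.2) \in garcs (Hstep G).
Proof.
move=> + eG; rewrite /Hstep /copy_hubs /= !mem_cat in_nil orbF.
case: i => [|[|[|[|i]]]] // _.
- by apply/or4P; constructor 1; apply/mapP; exists e.
- by apply/or4P; constructor 2; apply/mapP; exists e.
- by apply/or4P; constructor 3; apply/mapP; exists e.
- by apply/or4P; constructor 4; apply/mapP; exists e.
Qed.

Set Implicit Arguments.
Unset Strict Implicit.

Definition Inv G := [/\ forall x, x \in gverts G -> x < gbound G,
  forall e, e \in garcs G -> (e.1 < gbound G) /\ (e.2 < gbound G),
  0 \in gverts G & 1 \in gverts G].

Lemma F_lt B i x : x < B -> i < 4 -> F B i x < 4 + 4 * B.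
Proof.
move=> xB i4; case: (ltnP x 2) => x2.
  by have := F_lt4 B i x2; lia.
rewrite Fbig //; have : i * B <= 3 * B by rewrite leq_mul2r; lia.
lia.
Qed.

Lemma F_ge2 B j z : 4 <= F B j z -> 1 < z.
Proof. case: (ltnP z 2) => // /(F_lt4 B j); lia. Qed.

Lemma F_inj_same B i x y : i < 4 -> x < B -> y < B -> F B i x = F B i y -> x = y.
Proof.
move=> i4 xB yB E.
case: (ltnP x 2) => x2; case: (ltnP y 2) => y2.
- move: E; case: x x2 {xB} => [|[|//]] _; case: y y2 {yB} => [|[|//]] _ //;
  rewrite ?F0 ?F1; by case: i i4 => [|[|[|[|]]]].
- by have := F_lt4 B i x2; have := F_ge4 B i y2; lia.
- by have := F_lt4 B i y2; have := F_ge4 B i x2; lia.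
- by case: (F_inj x2 xB y2 yB E).
Qed.
Arguments F_inj_same {B i x y}.

Lemma hub_pair B i j x y x' y' : i < 4 -> j < 4 -> x < 2 -> y < 2 -> x' < 2 -> y' < 2 ->
  x != y -> F B i x = F B j x' -> F B i y = F B j y' -> i = j /\ x = x' /\ y = y'.
Proof.
move=> i4 j4.
case: x => [|[|//]] _; case: y => [|[|//]] _; case: x' => [|[|//]] _;
case: y' => [|[|//]] _ //= _; rewrite ?F0 ?F1;
case: i i4 => [|[|[|[|//]]]] _; case: j j4 => [|[|[|[|//]]]] _ //.
Qed.
Arguments hub_pair {B i j x y x' y'}.

Lemma AR G i x y : Inv G -> i < 4 -> x < gbound G -> y < gbound G -> x != y ->
  (F (gbound G) i x, F (gbound G) i y) \in garcs (Hstep G) -> (x, y) \in garcs G.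
Proof.
move=> [_ HA _ _] i4 xB yB xy /memA[j j4 [[a b] eG /= [Ea Eb]]].
have [aB bB] := HA _ eG; rewrite /= in aB bB.
suff ij : i = j.
  by subst j; rewrite (F_inj_same i4 xB aB Ea) (F_inj_same i4 yB bB Eb).
case: (ltnP x 2) => x2.
  case: (ltnP y 2) => y2.
    have a2 : a < 2.
      case: (ltnP a 2) => // a2; have := F_ge4 (gbound G) j a2; rewrite -Ea.
      by have := F_lt4 (gbound G) i x2; lia.
    have b2 : b < 2.
      case: (ltnP b 2) => // b2; have := F_ge4 (gbound G) j b2; rewrite -Eb.
      by have := F_lt4 (gbound G) i y2; lia.
    by case: (hub_pair i4 j4 x2 y2 a2 b2 xy Ea Eb).
  have b2 : 1 < b by apply: (@F_ge2 (gbound G) j); rewrite -Eb; apply: F_ge4.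
  by case: (F_inj y2 yB b2 bB Eb).
have a2 : 1 < a by apply: (@F_ge2 (gbound G) j); rewrite -Ea; apply: F_ge4.
by case: (F_inj x2 xB a2 aB Ea).
Qed.
Arguments AR {G i x y}.

Lemma adjR G i x y : Inv G -> i < 4 -> x < gbound G -> y < gbound G -> x != y ->
  adj (Hstep G) (F (gbound G) i x) (F (gbound G) i y) -> adj G x y.
Proof.
move=> IG i4 xB yB xy /orP[] /(AR IG i4) H; rewrite /adj.
  by rewrite H.
by rewrite H // ?orbT // eq_sym.
Qed.

Lemma adjF G u w : Inv G -> adj (Hstep G) u w ->
  exists2 j, j < 4 & exists x, exists y, [/\ x < gbound G, y < gbound G,
     u = F (gbound G) j x & w = F (gbound G) j y].
Proof.
move=> [_ HA _ _] /orP[]/memA[j j4 [[a b] eG /= [Ea Eb]]];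
have [aB bB] := HA _ eG; exists j => //.
  by exists a, b.
by exists b, a.
Qed.

Lemma adj_sym G u w : adj G u w = adj G w u.
Proof. by rewrite /adj orbC. Qed.

Lemma NB G i x w : Inv G -> i < 4 -> 1 < x -> x < gbound G ->
  adj (Hstep G) (F (gbound G) i x) w ->
  w = ha i \/ w = hb i \/ exists2 y, (1 < y) && (y < gbound G) & w = F (gbound G) i y.
Proof.
move=> IG i4 x1 xB /(adjF IG)[j j4 [a [b [aB bB Ea ->]]]].
have a2 : 1 < a by apply: (@F_ge2 (gbound G) j); rewrite -Ea; apply: F_ge4.
have [<- _] := F_inj x1 xB a2 aB Ea.
case: b bB => [|[|b]] bB; [by left | by right; left | right; right].
by exists b.+2 => //; apply/andP.
Qed.

Lemma VL G u : Inv G -> u \in gverts (Hstep G) -> 4 <= u ->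
  exists2 i, i < 4 & exists2 x, x \in gverts G & (1 < x) /\ u = F (gbound G) i x.
Proof.
move=> IG /memV[|[i i4 [x xG ->]]]; first lia.
move=> h; exists i => //; exists x => //; split => //.
exact: F_ge2 h.
Qed.


Lemma W G i h l : forall x, Inv G -> i < 4 -> 1 < x -> x < gbound G -> h < 4 ->
  all (fun u => 4 <= u) l -> all (fun u => u \in gverts (Hstep G)) l ->
  path (adj (Hstep G)) (F (gbound G) i x) (rcons l h) ->
  (h = ha i \/ h = hb i) /\
  exists2 l0, l = map (F (gbound G) i) l0 & all (fun y => (y \in gverts G) && (1 < y)) l0.
Proof.
elim: l => [|u l IH] x IG i4 x1 xB h4.
  rewrite /= andbT => _ _ /(NB IG i4 x1 xB) [->|[->|[y /andP[y1 yB] E]]].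
  - by split; [left|exists [::]].
  - by split; [right|exists [::]].
  - by move: h4; rewrite E; have := F_ge4 (gbound G) i y1; lia.
move=> /andP[u4 l4] /andP[uG lG] /andP[adu pl].
have [Eu|[Eu|[y /andP[y1 yB] Eu]]] := NB IG i4 x1 xB adu.
- by move: u4; rewrite Eu; have := ha_lt i; lia.
- by move: u4; rewrite Eu; have := hb_lt i; lia.
have [j j4 [z zG [z1 Ez]]] := VL IG uG u4.
have zB : z < gbound G by case: IG => HV _ _ _; exact: HV.
have [ij yz] := F_inj y1 yB z1 zB (etrans (esym Eu) Ez).
subst j z.
rewrite Eu in pl.
have [Hh [l0 El0 Al0]] := IH y IG i4 y1 yB h4 l4 lG pl.
split=> //; exists (y :: l0); first by rewrite /= Eu El0.
by rewrite /= zG y1.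
Qed.

Lemma SL G a h s : Inv G -> a < 4 -> h < 4 -> a != h ->
  all (fun u => 4 <= u) s -> all (fun u => u \in gverts (Hstep G)) s ->
  path (adj (Hstep G)) a (rcons s h) ->
  exists2 i, i < 4 & ((a = ha i /\ h = hb i) \/ (a = hb i /\ h = ha i)) /\
  exists2 s0, s = map (F (gbound G) i) s0 & all (fun y => (y \in gverts G) && (1 < y)) s0.
Proof.
move=> IG a4 h4 ah; case: s => [|u s].
  rewrite /= andbT => _ _ /(adjF IG) [j j4 [x [y [xB yB Ea Eh]]]].
  exists j => //; split; last by exists [::].
  have x2 : x < 2.
    case: (ltnP x 2) => // x2; have := F_ge4 (gbound G) j x2; lia.
  have y2 : y < 2.
    case: (ltnP y 2) => // y2; have := F_ge4 (gbound G) j y2; lia.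
  move: Ea Eh ah; case: x x2 {xB} => [|[|//]] _; case: y y2 {yB} => [|[|//]] _;
  rewrite ?F0 ?F1 => -> -> //; rewrite ?eqxx //; by [left | right].
move=> /andP[u4 s4] /andP[uG sG] /andP[adu ps].
have [i i4 [x xG [x1 Eu]]] := VL IG uG u4.
have xB : x < gbound G by case: IG => HV _ _ _; exact: HV.
rewrite Eu adj_sym in adu; rewrite Eu in ps.
have [Hh [s0 Es0 As0]] := W IG i4 x1 xB h4 s4 sG ps.
exists i => //; split; last first.
  by exists (x :: s0); [rewrite /= Eu Es0 | rewrite /= xG x1].
have [Ea|[Ea|[y /andP[y1 yB] E]]] := NB IG i4 x1 xB adu.
- left; split=> //; case: Hh => // Eh; move: ah; by rewrite Ea Eh eqxx.
- right; split=> //; case: Hh => // Eh; move: ah; by rewrite Ea Eh eqxx.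
- by have := F_ge4 (gbound G) i y1; lia.
Qed.


Definition cnt G p := count (fun e => e \in garcs G) (zip p (behead p)).

Lemma CL G i q : Inv G -> i < 4 -> forall x, uniq (x :: q) ->
  all (fun x => x < gbound G) (x :: q) ->
  cnt (Hstep G) (map (F (gbound G) i) (x :: q)) = cnt G (x :: q).
Proof.
move=> IG i4; elim: q => [|y q IH] x //.
move=> /andP[xn uq] /andP[xB /andP[yB aq]].
rewrite /cnt /= -!/(cnt _ _) -(IH y uq) /=; last by rewrite yB.
congr (_ + _); congr (nat_of_bool _).
have xy : x != y by apply: contra xn => /eqP->; rewrite inE eqxx.
apply/idP/idP.
  exact: AR.
by move=> H; apply: (memA' G i (x,y) i4 H).
Qed.

Lemma PR G i q : Inv G -> i < 4 -> forall x, uniq (x :: q) ->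
  all (fun x => x < gbound G) (x :: q) ->
  path (adj (Hstep G)) (F (gbound G) i x) (map (F (gbound G) i) q) -> path (adj G) x q.
Proof.
move=> IG i4; elim: q => [|y q IH] x // /andP[xn uq] /andP[xB /andP[yB aq]] /= /andP[ad pq].
have xy : x != y by apply: contra xn => /eqP->; rewrite inE eqxx.
rewrite (adjR IG i4 xB yB xy ad) /=.
by apply: IH => //=; rewrite yB.
Qed.

Lemma NL G p i q : Inv G -> i < 4 -> 0 \in q -> 1 \in q ->
  {subset map (F (gbound G) i) q <= p} ->
  (forall x, x \in gverts G -> x \notin q -> F (gbound G) i x \notin p) ->
  nice (Hstep G) p -> nice G q.
Proof.
move=> IG i4 q0 q1 sub out [M [HM1 HM2]].
have HV : forall x, x \in gverts G -> x < gbound G by case: IG.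
set B := gbound G in HV sub out HM1 HM2 *.
pose isin u := (4 + i * B + 2 <= u) && (u < 4 + i * B + B).
pose unf u := u - (4 + i * B).
have isinE u : isin u -> [/\ 1 < unf u, unf u < B & u = F B i (unf u)].
  rewrite /isin /unf => /andP[h1 h2]; split; try lia.
  rewrite Fbig; lia.
have isinF x : 1 < x -> x < B -> isin (F B i x) && (unf (F B i x) == x).
  move=> x1 xB; rewrite Fbig // /isin /unf; apply/andP; split; first (apply/andP; split); lia.
have inp x : x \in q -> F B i x \in p.
  by move=> xq; apply: sub; apply/mapP; exists x.
have back u : isin u -> u \in [seq v <- gverts (Hstep G) | v \notin p] ->
    unf u \in [seq v <- gverts G | v \notin q].
  move=> iu; rewrite !mem_filter => /andP[up uG].
  have [a1 aB Ea] := isinE _ iu.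
  have u4 : 4 <= u by move: iu => /andP[]; lia.
  have [j j4 [z zG [z1 Ez]]] := VL IG uG u4.
  have [ji zu] := F_inj z1 (HV _ zG) a1 aB (etrans (esym Ez) Ea).
  rewrite -zu zG andbT; apply: contra up => zq.
  by rewrite Ez ji; apply: inp.
exists [seq (unf e.1, unf e.2) | e <- M & isin e.1 && isin e.2]; split.
  move=> e0 /mapP[e eF ->]; have /andP[i12 eM] : (isin e.1 && isin e.2) && (e \in M) by move: eF; rewrite mem_filter.
  case/andP: i12 => i1 i2 /=.
  have [ne ad e1S e2S] := HM1 e eM.
  have [a1 aB Ea] := isinE _ i1; have [b1 bB Eb] := isinE _ i2.
  have ab : unf e.1 != unf e.2.
    by apply: contra ne => /eqP E; rewrite Ea Eb E.
  split => //; last by [apply: back]; last by [apply: back].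
  by apply: (adjR IG i4 aB bB ab); rewrite -Ea -Eb.
move=> v; rewrite mem_filter => /andP[vq vG].
have vB := HV _ vG.
have v1 : 1 < v.
  case: v vq {vG vB} => [|[|v]] //; by rewrite ?q0 ?q1.
set u := F B i v.
have uS : u \in [seq v <- gverts (Hstep G) | v \notin p].
  by rewrite mem_filter out // memV'.
rewrite count_map count_filter -(HM2 u uS); apply: eq_in_count => e eM /=.
have [ne ad e1S e2S] := HM1 e eM.
have key w : (isin w && (unf w == v)) = (w == u).
  case: (eqVneq w u) => [->|wu]; first by apply: isinF.
  apply/negP => /andP[iw /eqP uw]; move/eqP: wu; apply.
  by have [_ _ ->] := isinE _ iw; rewrite uw.
have nbr w : w \in [seq v <- gverts (Hstep G) | v \notin p] -> adj (Hstep G) u w -> isin w.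
  rewrite mem_filter => /andP[wp _] /(NB IG i4 v1 vB) [Ew|[Ew|[y /andP[y1 yB] Ew]]].
  - by move: wp; rewrite Ew -(F0 B i) inp.
  - by move: wp; rewrite Ew -(F1 B i) inp.
  - by rewrite Ew; case/andP: (isinF y y1 yB).
case h1: (e.1 == u).
  have := key e.1; rewrite h1 => /andP[-> ->] /=.
  rewrite nbr //; by rewrite -(eqP h1).
case h2: (e.2 == u).
  have := key e.2; rewrite h2 => /andP[-> ->] /=.
  rewrite nbr ?orbT //; by rewrite adj_sym -(eqP h2).
have := key e.1; have := key e.2; rewrite h1 h2.
by case: (isin e.1); case: (isin e.2); case: (unf e.1 == v); case: (unf e.2 == v).
Qed.


Lemma split_first (r : seq nat) : has (fun u => u < 4) r ->
  exists s h t, [/\ r = s ++ h :: t, all (fun u => 4 <= u) s & h < 4].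
Proof.
elim: r => [//|u r IH] /=; case: (ltnP u 4) => [u4 _|u4 /= /IH [s [h [t [-> As h4]]]]].
  by exists [::], u, r.
by exists (u :: s), h, t; rewrite /= u4 As.
Qed.

Lemma cnt_cat G x s y t : cnt G (x :: s ++ y :: t) = cnt G (x :: rcons s y) + cnt G (y :: t).
Proof.
elim: s x => [|z s IH] x; first by rewrite /cnt /=; rewrite addn0.
by rewrite /cnt /= -!/(cnt _ _) IH /= addnA.
Qed.

Lemma last_nil (s : seq nat) h t z : uniq (s ++ h :: t) -> last z (s ++ h :: t) = h -> t = [::].
Proof.
case: t => [//|y t] U; have hn : h \notin y :: t.
  by move: U; rewrite cat_uniq => /and3P[_ _ /andP[]].
rewrite last_cat /= => E.
by move: hn; have := mem_last y t; rewrite E => ->.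
Qed.

Lemma uniq_split (x : nat) s y t : uniq (x :: s ++ y :: t) ->
  uniq (x :: rcons s y) /\ uniq (y :: t).
Proof.
move=> /= /andP[xn U2].
have xs : x \notin s by apply: contra xn; rewrite mem_cat => ->.
have xy : x != y by apply: contra xn => /eqP->; rewrite mem_cat inE eqxx orbT.
move: U2; rewrite cat_uniq => /and3P[us hs uyt].
have ys : y \notin s by apply: contra hs => ys; apply/hasP; exists y; rewrite ?inE ?eqxx.
split => //.
by rewrite /= -cats1 mem_cat inE negb_or xs xy cat_uniq us /= orbF ys.
Qed.

Lemma path_split (e : rel nat) x s y t : path e x (s ++ y :: t) = path e x (rcons s y) && path e y t.
Proof. by rewrite cat_path rcons_path /= andbA. Qed.

Lemma sub1 (x : nat) s y t : {subset x :: rcons s y <= x :: s ++ y :: t}.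
Proof. by move=> u; rewrite !inE mem_rcons mem_cat !inE; case/orP=> [->|/orP[->|->]]; rewrite ?orbT. Qed.

Lemma sub2 (x : nat) s y t : {subset y :: t <= x :: s ++ y :: t}.
Proof. by move=> u; rewrite !inE mem_cat !inE => ->; rewrite ?orbT. Qed.

Lemma notin_big (s : seq nat) u : all (fun u => 4 <= u) s -> u < 4 -> u \notin s.
Proof. move=> /allP A u4; apply/negP => /A /=; lia. Qed.

Lemma MemF G i j x l : Inv G -> 1 < x -> x < gbound G ->
  all (fun y => (y \in gverts G) && (1 < y)) l ->
  F (gbound G) i x \in map (F (gbound G) j) l -> i = j /\ x \in l.
Proof.
move=> [HV _ _ _] x1 xB /allP A /mapP[y yl E].
have /andP[yG y1] := A y yl.
have [-> ->] := F_inj x1 xB y1 (HV _ yG) E.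
by [].
Qed.

Definition PG G := forall p, is_path G p -> head 0 p = v1 -> last 0 p = v2 ->
  nice G p -> oddly_oriented G p.

Lemma SF G p i s0 : Inv G -> PG G -> i < 4 ->
  all (fun y => (y \in gverts G) && (1 < y)) s0 ->
  path (adj (Hstep G)) (ha i) (rcons (map (F (gbound G) i) s0) (hb i)) ->
  uniq (ha i :: rcons (map (F (gbound G) i) s0) (hb i)) ->
  {subset ha i :: rcons (map (F (gbound G) i) s0) (hb i) <= p} ->
  (forall x, x \in gverts G -> x \notin 0 :: rcons s0 1 -> F (gbound G) i x \notin p) ->
  nice (Hstep G) p ->
  odd (cnt (Hstep G) (ha i :: rcons (map (F (gbound G) i) s0) (hb i))).
Proof.
move=> IG PGG i4 As0 pth un sub out np.
have [HV _ G0 G1] := IG.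
have Eq : map (F (gbound G) i) (0 :: rcons s0 1) = ha i :: rcons (map (F (gbound G) i) s0) (hb i).
  by rewrite /= map_rcons.
rewrite -Eq in pth un sub *.
have uq : uniq (0 :: rcons s0 1) by apply: map_uniq un.
have Aq : all (fun x => x \in gverts G) (0 :: rcons s0 1).
  apply/allP => y; rewrite inE mem_rcons inE.
  by case/or3P=> [/eqP->|/eqP->|/(allP As0)/andP[]].
have Bq : all (fun x => x < gbound G) (0 :: rcons s0 1).
  by apply/allP => y /(allP Aq) /HV.
rewrite (CL IG i4 uq Bq).
apply: PGG => //.
- rewrite /is_path uq Aq /=; apply: (PR IG i4 uq Bq).
  by rewrite /= map_rcons in pth *.
- by rewrite /= last_rcons.
- apply: (NL IG i4 _ _ sub out np); by rewrite ?inE ?mem_rcons ?inE ?eqxx ?orbT.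
Qed.


Lemma outH G x s0 : Inv G -> x \in gverts G -> x \notin 0 :: rcons s0 1 ->
  [/\ 1 < x, x < gbound G & x \notin s0].
Proof.
move=> [HV _ _ _] xG; rewrite inE mem_rcons inE !negb_or => /and3P[x0 x1 xs].
split => //; last exact: HV.
by case: x x0 x1 {xG xs} => [|[|x]].
Qed.

Lemma memP2 (u : nat) a : u \in 0 :: a ++ [:: 1] -> 4 <= u -> u \in a.
Proof.
rewrite !(inE, mem_cat) => H u4.
have n0 : (u == 0) = false by apply/eqP; lia.
have n1 : (u == 1) = false by apply/eqP; lia.
by move: H; rewrite n0 n1 /= ?orbF.
Qed.

Lemma memP4 (u : nat) a b c : u \in 0 :: a ++ 2 :: b ++ 3 :: c ++ [:: 1] -> 4 <= u ->
  [\/ u \in a, u \in b | u \in c].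
Proof.
rewrite !(inE, mem_cat) => H u4.
have n0 : (u == 0) = false by apply/eqP; lia.
have n1 : (u == 1) = false by apply/eqP; lia.
have n2 : (u == 2) = false by apply/eqP; lia.
have n3 : (u == 3) = false by apply/eqP; lia.
rewrite n0 n1 n2 n3 /= orbF in H.
by case/or3P: H => H; [constructor 1|constructor 2|constructor 3].
Qed.

Lemma hubs_bool a h i : (a = ha i /\ h = hb i) \/ (a = hb i /\ h = ha i) ->
  ((a == ha i) && (h == hb i)) || ((a == hb i) && (h == ha i)).
Proof. by case=> [[-> ->]|[-> ->]]; rewrite !eqxx ?orbT. Qed.

Lemma lt4_mem i : i < 4 -> i \in [:: 0; 1; 2; 3].
Proof. by case: i => [|[|[|[|]]]]. Qed.

Lemma step G : Inv G -> PG G -> PG (Hstep G).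
Proof.
move=> IG PGG [//|x r] /and4P[_ up pV pp] /= hp lp np.
rewrite /v1 in hp; subst x; rewrite /v2 in lp.
have r1 : 1 \in r by have := mem_last 0 r; rewrite lp inE.
have [s1 [h1 [t1 [Er As1 h14]]]] := split_first (r := r) (introT hasP (ex_intro2 _ _ 1 r1 isT)).
subst r.
move: pp; rewrite path_split => /andP[pp1 ppt].
move: pV => /= /andP[_]; rewrite all_cat => /andP[Vs1 /= /andP[_ Vt1]].
have [u1 ut1] := uniq_split up.
have n0h1 : 0 != h1 by move: u1 => /= /andP[+ _]; apply: contra => /eqP<-; rewrite mem_rcons inE eqxx.
have [i1 i14 [/hubs_bool Hb [s01 Es01 As01]]] := SL IG (isT : 0 < 4) h14 n0h1 As1 Vs1 pp1.
subst s1; clear As1 Vs1.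
have : i1 \in [:: 0; 1; 2; 3] by apply: lt4_mem.
rewrite !inE => /or4P[]/eqP Ei; subst i1; move: Hb => //=; rewrite ?orbF => /eqP Eh1; subst h1.
- (* copy 1, h1 = 2 *)
  have nS1 : forall u, u < 4 -> u \notin (map (F (gbound G) 0) s01).
    move=> u u4; apply/negP => /mapP[y /(allP As01) /andP[_ y1] E].
    by move: u4; rewrite E ltnNge (F_ge4 _ _ y1).
  have t11 : 1 \in t1.
    by move: r1; rewrite mem_cat (negbTE (nS1 1 isT)) inE.
  have n0t1 : 0 \notin t1.
    by apply: contra (proj1 (andP up)) => H; rewrite mem_cat inE H !orbT.
  have n2t1 : 2 \notin t1 by case/andP: ut1.
  have [s2 [h2 [t2 [Et1 As2 h24]]]] := split_first (r := t1) (introT hasP (ex_intro2 _ _ 1 t11 isT)).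
  subst t1.
  move: ppt; rewrite path_split => /andP[pp2 ppt].
  move: Vt1; rewrite all_cat => /andP[Vs2 /= /andP[_ Vt2]].
  have [u2 ut2] := uniq_split ut1.
  have n2h2 : 2 != h2 by move: u2 => /= /andP[+ _]; apply: contra => /eqP<-; rewrite mem_rcons inE eqxx.
  have [i2 i24 [/hubs_bool Hb [s02 Es02 As02]]] := SL IG (isT : 2 < 4) h24 n2h2 As2 Vs2 pp2.
  subst s2; clear As2 Vs2.
  have : i2 \in [:: 0; 1; 2; 3] by apply: lt4_mem.
  rewrite !inE => /or4P[]/eqP Ei; subst i2; rewrite /= ?orbF in Hb; try by []; move/eqP: Hb => Eh2; subst h2.
    by move: n0t1; rewrite mem_cat inE eqxx orbT.
  have nS2 : forall u, u < 4 -> u \notin (map (F (gbound G) 1) s02).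
    move=> u u4; apply/negP => /mapP[y /(allP As02) /andP[_ y1] E].
    by move: u4; rewrite E ltnNge (F_ge4 _ _ y1).
  have t21 : 1 \in t2.
    by move: t11; rewrite mem_cat (negbTE (nS2 1 isT)) inE.
  have n2t2 : 2 \notin t2.
    by apply: contra n2t1 => H; rewrite mem_cat inE H !orbT.
  have [s3 [h3 [t3 [Et2 As3 h34]]]] := split_first (r := t2) (introT hasP (ex_intro2 _ _ 1 t21 isT)).
  subst t2.
  move: ppt; rewrite path_split => /andP[pp3 ppt].
  move: Vt2; rewrite all_cat => /andP[Vs3 /= /andP[_ Vt3]].
  have [u3 ut3] := uniq_split ut2.
  have n3h3 : 3 != h3 by move: u3 => /= /andP[+ _]; apply: contra => /eqP<-; rewrite mem_rcons inE eqxx.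
  have [i3 i34 [/hubs_bool Hb [s03 Es03 As03]]] := SL IG (isT : 3 < 4) h34 n3h3 As3 Vs3 pp3.
  subst s3; clear As3 Vs3.
  have : i3 \in [:: 0; 1; 2; 3] by apply: lt4_mem.
  rewrite !inE => /or4P[]/eqP Ei; subst i3; rewrite /= ?orbF in Hb; try by []; move/eqP: Hb => Eh3; subst h3.
    by move: n2t2; rewrite mem_cat inE eqxx orbT.
  have t0 : t3 = [::].
    apply: (@last_nil (map (F (gbound G) 2) s03) 1 t3 3); last by move: lp; rewrite last_cat /= last_cat /=.
    by case/andP: ut2.
  subst t3.
  change (odd (cnt (Hstep G) (0 :: (map (F (gbound G) 0) s01) ++ 2 :: (map (F (gbound G) 1) s02) ++ 3 :: (map (F (gbound G) 2) s03) ++ [:: 1]))).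
  have out : forall k y, k < 3 -> y \in gverts G -> F (gbound G) k y \in 0 :: (map (F (gbound G) 0) s01) ++ 2 :: (map (F (gbound G) 1) s02) ++ 3 :: (map (F (gbound G) 2) s03) ++ [:: 1] ->
      1 < y -> y < gbound G -> [\/ k = 0 /\ y \in s01, k = 1 /\ y \in s02 | k = 2 /\ y \in s03].
    move=> k y k3 yG Hm y1 yB; case: (memP4 Hm (F_ge4 _ _ y1)) => H.
    - by constructor 1; apply: MemF IG y1 yB As01 H.
    - by constructor 2; apply: MemF IG y1 yB As02 H.
    - by constructor 3; apply: MemF IG y1 yB As03 H.
  have o1 : odd (cnt (Hstep G) (0 :: rcons (map (F (gbound G) 0) s01) 2)).
    apply: (SF (i:=0) IG PGG _ As01 _ _ _ _ np) => //.
    + exact: sub1.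
    + move=> y yG /(outH IG yG) [y1 yB ys]; apply/negP => Hm.
      by case: (out 0 y isT yG Hm y1 yB) => [][] // _ yin; rewrite yin in ys.
  have o2 : odd (cnt (Hstep G) (2 :: rcons (map (F (gbound G) 1) s02) 3)).
    apply: (SF (i:=1) IG PGG _ As02 _ _ _ _ np) => //.
    + by move=> u /sub1 /sub2.
    + move=> y yG /(outH IG yG) [y1 yB ys]; apply/negP => Hm.
      by case: (out 1 y isT yG Hm y1 yB) => [][] // _ yin; rewrite yin in ys.
  have o3 : odd (cnt (Hstep G) (3 :: rcons (map (F (gbound G) 2) s03) 1)).
    apply: (SF (i:=2) IG PGG _ As03 _ _ _ _ np) => //.
    + by move=> u /sub1 /sub2 /sub2.
    + move=> y yG /(outH IG yG) [y1 yB ys]; apply/negP => Hm.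
      by case: (out 2 y isT yG Hm y1 yB) => [][] // _ yin; rewrite yin in ys.
  by rewrite cnt_cat cnt_cat cats1 !oddD o1 o2 o3.
- (* copy 4, h1 = 1 *)
  have t0 : t1 = [::].
    apply: (@last_nil _ _ _ 0); last exact: lp. by case/andP: up.
  subst t1.
  change (odd (cnt (Hstep G) (0 :: map (F (gbound G) 3) s01 ++ [:: 1]))).
  rewrite cats1; apply: (SF (i:=3) IG PGG _ As01 _ _ _ _ np) => //.
  + exact: sub1.
  + move=> y yG /(outH IG yG) [y1 yB ys]; apply/negP => Hm; have H := memP2 Hm (F_ge4 _ _ y1).
    have [_ yin] := MemF IG y1 yB As01 H.
    by rewrite yin in ys.
Qed.


Lemma H1_ok : PG H1.
Proof.
move=> p /and4P[_ up pV pp] hp lp _.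
have sz : size p <= 4 by have := uniq_leq_size up (fun x hx => allP pV x hx).
move: up pV pp hp lp sz.
case: p => [|a [|b [|c [|d [|e q]]]]] //=.
- case: a => [|[|[|[|a]]]]; by [].
- case: a => [|[|[|[|a]]]]; case: b => [|[|[|[|b]]]]; by [].
- case: a => [|[|[|[|a]]]]; case: b => [|[|[|[|b]]]]; case: c => [|[|[|[|c]]]]; by [].
- case: a => [|[|[|[|a]]]]; case: b => [|[|[|[|b]]]]; case: c => [|[|[|[|c]]]];
  case: d => [|[|[|[|d]]]]; by [].
Qed.

Lemma Inv_H1 : Inv H1.
Proof.
split => //.
- by move=> x; rewrite !inE => /or4P[]/eqP->.
- by move=> e; rewrite !inE => /or4P[]/eqP->.
Qed.

Lemma Inv_step G : Inv G -> Inv (Hstep G).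
Proof.
move=> IG; have [HV HA _ _] := IG.
have i4 : gbound (Hstep G) = 4 + 4 * gbound G by [].
split.
- move=> x /memV[x4|[i i4' [y yG ->]]]; rewrite i4; first lia.
  by apply: F_lt => //; apply: HV.
- move=> [u w] /memA[i i4' [e eG [-> ->]]]; rewrite i4 /=.
  by have [e1 e2] := HA e eG; split; apply: F_lt.
- exact: memV01.
- exact: memV01.
Qed.

Lemma all_ok g : 1 <= g -> Inv (H g) /\ PG (H g).
Proof.
elim: g => [//|[|g] IH] _.
  by split; [exact: Inv_H1 | exact: H1_ok].
have [IG PGG] := IH isT.
change (Inv (Hstep (H g.+1)) /\ PG (Hstep (H g.+1))).
by split; [apply: Inv_step | apply: step].
Qed.

Unset Implicit Arguments.
Set Strict Implicit.

Theorem lemma3 (g : nat) (p : seq nat) :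
  1 <= g ->
  is_path (H g) p -> head 0 p = v1 -> last 0 p = v2 ->
  nice (H g) p ->
  oddly_oriented (H g) p.
Proof. by move=> /all_ok [_ PGG]; apply: PGG. Qed.
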